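(* For all integers $k,m,\lambda\ge0$ there exists $n\ge0$ with the following property. Let $A_1,\dots,A_n,B_1,\dots,B_n$ be pairwise disjoint subsets of the vertex set of a graph $G$, each of cardinality $m$. Then either there exist $A\subseteq A_1\cup\dots\cup A_n$ and $B\subseteq B_1\cup\dots\cup B_n$ with $|A|=|B|=\lambda$ such that no vertex of $A$ has a neighbour in $B$; or there exist $I,J\subseteq\{1,\dots,n\}$ with $|I|=|J|=k$ such that $\bigcup_{i\in I}A_i$ is $G$-complete with $\bigcup_{j\in J}B_j$.
   Context: For a graph $G$ and $A,B\subseteq V(G)$, $A$ is $G$-complete with $B$ if $A\cap B=\emptyset$ and every vertex of $A$ is adjacent to every vertex of $B$. *)

(* Defs.v *)
From mathcomp Require Import all_boot.
Set Implicit Arguments. Unset Strict Implicit. Unset Printing Implicit Defensive.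

Definition simple_graph (T : finType) (e : rel T) : Prop :=
  symmetric e /\ irreflexive e.

Definition complete_with (T : finType) (e : rel T) (A B : {set T}) : Prop :=
  A :&: B = set0 /\ (forall x y, x \in A -> y \in B -> e x y).

(* Main.v *)
Require Import Defs.
From mathcomp Require Import all_boot.
Set Implicit Arguments. Unset Strict Implicit.
Lemma pigeon (X Y : finType) (f : X -> Y) N :
  #|Y| * N < #|X| -> exists y, N <= #|[set x | f x == y]|.
Proof.
move=> H.
have [y Hy|Hall] := pickP (fun y => N <= #|[set x | f x == y]|); first by exists y.
exfalso.
have E : #|X| = \sum_(y : Y) #|[set x | f x == y]|.
  rewrite -sum1_card (partition_big f predT) //=.
  by apply: eq_bigr => y _; rewrite sum1dep_card.
have : \sum_(y : Y) #|[set x | f x == y]| <= \sum_(y : Y) N.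
  apply: leq_sum => y _; have := Hall y; rewrite /= => /negbT; rewrite -ltnNge.
  exact: ltnW.
by rewrite -E sum_nat_const leqNgt H.
Qed.

Lemma sub_card (T : finType) (S : {set T}) N :
  N <= #|S| -> exists S' : {set T}, S' \subset S /\ #|S'| = N.
Proof.
move=> H; exists [set x in (take N (enum S) : seq T)]; split.
  by apply/subsetP => x; rewrite inE => /mem_take; rewrite mem_enum.
rewrite cardsE; have /card_uniqP -> : uniq (take N (enum S)) by apply: take_uniq; apply: enum_uniq.
by rewrite size_take -cardE; case: ltngtP H.
Qed.

Lemma bip_ramsey (C : finType) (N : nat) : exists n, forall c : 'I_n -> 'I_n -> C,
  exists I J : {set 'I_n}, #|I| = N /\ #|J| = N /\
    forall i j i' j', i \in I -> j \in J -> i' \in I -> j' \in J -> c i j = c i' j'.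
Proof.
pose r := (#|C| * N).+1.
exists (#|{ffun 'I_r -> C}| * N + r) => c.
have lern : r <= #|{ffun 'I_r -> C}| * N + r by apply: leq_addl.
pose w (t : 'I_r) : 'I_(#|{ffun 'I_r -> C}| * N + r) := widen_ord lern t.
pose v j : {ffun 'I_r -> C} := [ffun t => c (w t) j].
have [v0 Hv0] : exists y, N <= #|[set x | v x == y]|.
  by apply: pigeon; rewrite card_ord -{1}[_ * N]addn0 ltn_add2l.
have [col Hcol] : exists y, N <= #|[set x | v0 x == y]|.
  by apply: pigeon; rewrite card_ord ltnSn.
have [J [sJ cJ]] := sub_card Hv0.
have [R [sR cR]] := sub_card Hcol.
exists (w @: R), J; split.
  rewrite card_imset // => x y /(congr1 val) /= xy; exact: val_inj.
split => //.
have key : forall t j, t \in R -> j \in J -> c (w t) j = col.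
  move=> t j tR jJ.
  have := subsetP sJ _ jJ; rewrite inE => /eqP Hj.
  have := subsetP sR _ tR; rewrite inE => /eqP Ht.
  by rewrite -Ht -Hj ffunE.
move=> i j i' j' /imsetP[t tR ->] jJ /imsetP[t' t'R ->] j'J.
by rewrite !key.
Qed.

Theorem theorem3p1 :
  forall k m lambda : nat, exists n : nat,
  forall (T : finType) (e : rel T), simple_graph e ->
  forall (A B : 'I_n -> {set T}),
    (forall i j : 'I_n, i != j -> A i :&: A j = set0) ->
    (forall i j : 'I_n, i != j -> B i :&: B j = set0) ->
    (forall i j : 'I_n, A i :&: B j = set0) ->
    (forall i : 'I_n, #|A i| = m) ->
    (forall i : 'I_n, #|B i| = m) ->
    (exists (A' B' : {set T}),
        A' \subset \bigcup_(i < n) A i /\ B' \subset \bigcup_(i < n) B i /\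
        #|A'| = lambda /\ #|B'| = lambda /\
        (forall x y, x \in A' -> y \in B' -> ~~ e x y))
    \/
    (exists (I J : {set 'I_n}),
        #|I| = k /\ #|J| = k /\
        complete_with e (\bigcup_(i in I) A i) (\bigcup_(j in J) B j)).
Proof.
move=> k m lambda.
have [n Hn] := bip_ramsey (option ('I_m * 'I_m)) (maxn k lambda).
exists n => T e _ A B dA dB dAB cA cB.
pose P i j (pq : 'I_m * 'I_m) := [exists x in A i, exists y in B j,
  (index x (enum (A i)) == pq.1) && (index y (enum (B j)) == pq.2) && ~~ e x y].
pose c i j := [pick pq | P i j pq].
have [I [J [cI [cJ Hc]]]] := Hn c.
case: (boolP [exists i in I, exists j in J, c i j != None]) =>
  [/existsP[i0 /andP[i0I /existsP[j0 /andP[j0J]]]] | Hnone].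
- case E: (c i0 j0) => [pq|] //= _.
  have Hall : forall i j, i \in I -> j \in J -> P i j pq.
    move=> i j iI jJ; have : c i j = Some pq by rewrite -E; apply: Hc.
    by rewrite /c; case: pickP => [q Hq [<-]|].
  have [x0 _] : exists x0 : T, True.
    have /existsP[x _] := Hall _ _ i0I j0J; by exists x.
  pose a i := nth x0 (enum (A i)) pq.1.
  pose b j := nth x0 (enum (B j)) pq.2.
  have key : forall i j, i \in I -> j \in J ->
      [/\ a i \in A i, b j \in B j & ~~ e (a i) (b j)].
    move=> i j iI jJ; have /existsP[x /andP[xA /existsP[y /andP[yB]]]] := Hall _ _ iI jJ.
    case/andP => /andP[/eqP Hx /eqP Hy] nxy.
    have -> : a i = x by rewrite /a -Hx nth_index // mem_enum.
    have -> : b j = y by rewrite /b -Hy nth_index // mem_enum.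
    by [].
  have [I' [sI' cI']] := @sub_card _ I lambda ltac:(by rewrite cI leq_maxr).
  have [J' [sJ' cJ']] := @sub_card _ J lambda ltac:(by rewrite cJ leq_maxr).
  have j1 : j0 \in J := j0J.
  have i1 : i0 \in I := i0I.
  left; exists (a @: I'), (b @: J'); split; [|split; [|split; [|split]]].
  + apply/subsetP => _ /imsetP[i iI ->]; apply/bigcupP; exists i => //.
    by case: (key i j0 (subsetP sI' _ iI) j1).
  + apply/subsetP => _ /imsetP[j jJ ->]; apply/bigcupP; exists j => //.
    by case: (key i0 j i1 (subsetP sJ' _ jJ)).
  + rewrite card_in_imset // => i i' iI i'I Heq; apply/eqP; apply/negP => /negP ne.
    have := dA _ _ ne; move/setP/(_ (a i)); rewrite inE in_set0.
    case: (key i j0 (subsetP sI' _ iI) j1) => -> _ _.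
    by rewrite Heq; case: (key i' j0 (subsetP sI' _ i'I) j1) => ->.
  + rewrite card_in_imset // => j j' jJ j'J Heq; apply/eqP; apply/negP => /negP ne.
    have := dB _ _ ne; move/setP/(_ (b j)); rewrite inE in_set0.
    case: (key i0 j i1 (subsetP sJ' _ jJ)) => _ -> _.
    by rewrite Heq; case: (key i0 j' i1 (subsetP sJ' _ j'J)) => _ ->.
  + move=> _ _ /imsetP[i iI ->] /imsetP[j jJ ->].
    by case: (key i j (subsetP sI' _ iI) (subsetP sJ' _ jJ)).
- have HN : forall i j, i \in I -> j \in J -> c i j = None.
    move=> i j iI jJ; apply/eqP; apply: contraNT Hnone => H.
    by apply/existsP; exists i; rewrite iI; apply/existsP; exists j; rewrite jJ H.
  have [I' [sI' cI']] := @sub_card _ I k ltac:(by rewrite cI leq_maxl).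
  have [J' [sJ' cJ']] := @sub_card _ J k ltac:(by rewrite cJ leq_maxl).
  right; exists I', J'; split => //; split => //; split.
  + apply/setP => x; rewrite inE in_set0; apply/negP => /andP[/bigcupP[i _ xi] /bigcupP[j _ xj]].
    by have := dAB i j; move/setP/(_ x); rewrite inE xi xj in_set0.
  + move=> x y /bigcupP[i iI xi] /bigcupP[j jJ yj].
    case Exy: (e x y) => //.
    have hx : index x (enum (A i)) < m by rewrite -(cA i) cardE index_mem mem_enum.
    have hy : index y (enum (B j)) < m by rewrite -(cB j) cardE index_mem mem_enum.
    have := HN i j (subsetP sI' _ iI) (subsetP sJ' _ jJ).
    rewrite /c; case: pickP => [//|H] _.
    rewrite -(H (Ordinal hx, Ordinal hy)) /P; apply/existsP; exists x; rewrite xi; apply/existsP; exists y.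
    by rewrite yj /= !eqxx Exy.
Qed.
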